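(* For every process $s$, the set $\mathcal{L}(s)$ of trace distribution formulae satisfied by $s$ is a closed subset of the space of trace distribution formulae of $\mathcal{L}$ with respect to the topology induced by the metric $D$.
   Context: PTS $(\mathcal{S},A,\to)$ with finitely supported distributions; standing assumptions: processes are image-finite and finite. Computations $c=s_0\xrightarrow{a_1}\cdots\xrightarrow{a_n}s_n$ via transitions $s_{i-1}\xrightarrow{a_i}\pi_i$, $s_i\in\mathrm{supp}(\pi_i)$; $\Pr(c)=\prod\pi_i(s_i)$; $|c|=n$; maximal = not a proper prefix of another computation from the same process; $\mathcal{C}_{\max}(z)$. A resolution of $s$ is a PTS $\mathcal{Z}=(Z,A,\to_{\mathcal{Z}})$ with $\mathrm{corr}\colon Z\to\mathcal{S}$ and initial state $z_s$, $\mathrm{corr}(z_s)=s$, such that $z_s$ is in no target support, every other state is in the support of a target of a transition from a different state, every $z\xrightarrow{a}_{\mathcal{Z}}\pi$ is matched by $\mathrm{corr}(z)\xrightarrow{a}\pi'$ with $\pi(z')=\pi'(\mathrm{corr}(z'))$, and each state has at most one outgoing transition; $\mathrm{res}(s)$ the set of resolutions. Logic $\mathcal{L}$: trace formulae $\Phi::=\top\mid\langle a\rangle\Phi$, $\mathrm{depth}(\top)=0$, $\mathrm{depth}(\langle a\rangle\Phi)=1+\mathrm{depth}(\Phi)$; trace distribution formulae $\bigoplus_{i\in I}r_i\Phi_i$ ($I$ finite nonempty, $\Phi_i$ pairwise distinct, $r_i\in(0,1]$, $\sum r_i=1$), identified with probability distributions on trace formulae. $c\models\top$ always; $c\models\langle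 a\rangle\Phi$ iff $c=s\xrightarrow{a}c'$ with $c'\models\Phi$. $s\models\bigoplus_i r_i\Phi_i$ iff some $\mathcal{Z}\in\mathrm{res}(s)$ with initial state $z$ satisfies $\Pr(\{c\in\mathcal{C}_{\max}(z):c\models\Phi_i,|c|=\mathrm{depth}(\Phi_i)\})=r_i$ for all $i$. $\mathcal{L}(s)$ is the set of trace distribution formulae satisfied by $s$. Distance: $d(\Phi_1,\Phi_2)=0$ if $\Phi_1=\Phi_2$, else $1$; $D(\Psi_1,\Psi_2)=\min_\omega\sum\omega(\Phi,\Phi')d(\Phi,\Phi')$ over couplings $\omega$ of $\Psi_1,\Psi_2$ (Kantorovich lifting of $d$); $D$ is a metric on trace distribution formulae. *)

(* Defs.v *)
From Stdlib Require Import Reals List Classical ClassicalEpsilon.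
Import ListNotations.
Open Scope R_scope.

Set Implicit Arguments.

Fixpoint sum_list (l : list R) : R :=
  match l with [] => 0 | x :: l' => x + sum_list l' end.

Definition fsum (T : Type) (f : T -> R) (r : R) : Prop :=
  exists l : list T, NoDup l /\ (forall x, f x <> 0 -> In x l) /\
                     sum_list (map f l) = r.

Definition is_fdist (T : Type) (pi : T -> R) : Prop :=
  (forall x, 0 <= pi x) /\ fsum pi 1.

Definition ifP (P : Prop) (a b : R) : R :=
  if excluded_middle_informative P then a else b.

Definition pts_wf (S Act : Type) (trans : S -> Act -> (S -> R) -> Prop) : Prop :=
  forall s a pi, trans s a pi -> is_fdist pi.

Definition image_finite (S Act : Type) (trans : S -> Act -> (S -> R) -> Prop) : Prop :=
  forall s a, exists l : list (S -> R), forall pi, trans s a pi -> In pi l.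

Definition step (S Act : Type) (trans : S -> Act -> (S -> R) -> Prop) (t u : S) : Prop :=
  exists a pi, trans u a pi /\ 0 < pi t.

(* finite process: no infinite computation starts from s *)
Definition finite_process (S Act : Type) (trans : S -> Act -> (S -> R) -> Prop) (s : S) : Prop :=
  Acc (step trans) s.

(* A computation  z0 --a1--> z1 ... --an--> zn  via transitions z_{i-1} --a_i--> pi_i,
   z_i in supp(pi_i), is represented by its start state and the list of steps
   (a_i, pi_i, z_i). *)

Fixpoint is_comp (Z Act : Type) (transZ : Z -> Act -> (Z -> R) -> Prop)
         (z : Z) (c : list (Act * (Z -> R) * Z)) : Prop :=
  match c with
  | [] => True
  | (a, pi, z') :: c' => transZ z a pi /\ 0 < pi z' /\ is_comp transZ z' c'
  end.

Fixpoint comp_prob (Z Act : Type) (c : list (Act * (Z -> R) * Z)) : R :=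
  match c with
  | [] => 1
  | (a, pi, z') :: c' => pi z' * comp_prob c'
  end.

Definition is_max_comp (Z Act : Type) (transZ : Z -> Act -> (Z -> R) -> Prop)
           (z : Z) (c : list (Act * (Z -> R) * Z)) : Prop :=
  is_comp transZ z c /\
  ~ (exists ext, ext <> [] /\ is_comp transZ z (c ++ ext)).

Definition resolution (S Act : Type) (trans : S -> Act -> (S -> R) -> Prop) (s : S)
           (Z : Type) (transZ : Z -> Act -> (Z -> R) -> Prop) (corr : Z -> S) (zs : Z)
  : Prop :=
  pts_wf transZ /\
  corr zs = s /\
  (forall z a pi, transZ z a pi -> ~ (0 < pi zs)) /\
  (forall z, z <> zs -> exists z' a pi, z' <> z /\ transZ z' a pi /\ 0 < pi z) /\
  (forall z a pi, transZ z a pi ->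
     exists pi', trans (corr z) a pi' /\
       forall z', 0 < pi z' -> pi z' = pi' (corr z')) /\
  (forall z a1 pi1 a2 pi2, transZ z a1 pi1 -> transZ z a2 pi2 -> a1 = a2 /\ pi1 = pi2).

Inductive tform (Act : Type) : Type :=
| TTop : tform Act
| TDia : Act -> tform Act -> tform Act.
Arguments TTop {Act}.

Fixpoint depth (Act : Type) (f : tform Act) : nat :=
  match f with TTop => 0%nat | TDia _ f' => S (depth f') end.

Fixpoint comp_sat (Z Act : Type) (c : list (Act * (Z -> R) * Z)) (f : tform Act) : Prop :=
  match f with
  | TTop => True
  | TDia a f' =>
      match c with
      | [] => False
      | (b, _, _) :: c' => b = a /\ comp_sat c' f'
      end
  end.

(* trace distribution formulae = finitely supported probability distributions
   on trace formulae (the support gives the pairwise distinct Phi_i with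
   weights r_i in (0,1] summing to 1) *)
Definition is_tdf (Act : Type) (Psi : tform Act -> R) : Prop := is_fdist Psi.

Definition prob_is (Z Act : Type) (X : list (Act * (Z -> R) * Z) -> Prop) (r : R) : Prop :=
  fsum (fun c => ifP (X c) (comp_prob c) 0) r.

Definition sat_tdf (S Act : Type) (trans : S -> Act -> (S -> R) -> Prop) (s : S)
           (Psi : tform Act -> R) : Prop :=
  exists (Z : Type) (transZ : Z -> Act -> (Z -> R) -> Prop) (corr : Z -> S) (zs : Z),
    resolution trans s transZ corr zs /\
    forall Phi, 0 < Psi Phi ->
      prob_is (fun c => is_max_comp transZ zs c /\ comp_sat c Phi /\
                        length c = depth Phi)
              (Psi Phi).

Definition Lset (S Act : Type) (trans : S -> Act -> (S -> R) -> Prop) (s : S)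
           (Psi : tform Act -> R) : Prop :=
  is_tdf Psi /\ sat_tdf trans s Psi.

Definition dtf (Act : Type) (f1 f2 : tform Act) : R := ifP (f1 = f2) 0 1.

Definition coupling (Act : Type) (Psi1 Psi2 : tform Act -> R)
           (w : tform Act * tform Act -> R) : Prop :=
  is_fdist w /\
  (forall f, fsum (fun f' => w (f, f')) (Psi1 f)) /\
  (forall f', fsum (fun f => w (f, f')) (Psi2 f')).

Definition coupling_cost (Act : Type) (w : tform Act * tform Act -> R) (r : R) : Prop :=
  fsum (fun p => w p * dtf (fst p) (snd p)) r.

(* D(Psi1,Psi2) = r : r is the minimum over couplings of the cost
   (Kantorovich lifting of d) *)
Definition D_is (Act : Type) (Psi1 Psi2 : tform Act -> R) (r : R) : Prop :=
  (exists w, coupling Psi1 Psi2 w /\ coupling_cost w r) /\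
  (forall w r', coupling Psi1 Psi2 w -> coupling_cost w r' -> r <= r').

Definition D_closed (Act : Type) (X : (tform Act -> R) -> Prop) : Prop :=
  forall Psi, is_tdf Psi -> ~ X Psi ->
    exists eps, 0 < eps /\
      forall Psi' d, is_tdf Psi' -> D_is Psi Psi' d -> d < eps -> ~ X Psi'.

(* Main.v *)
Require Import Defs.
From Stdlib Require Import Reals List.
From Stdlib Require Import Lra Lia FinFun FunctionalExtensionality Classical ClassicalEpsilon.
Import ListNotations.
Open Scope R_scope.

Lemma sum_app (l1 l2 : list R) : sum_list (l1 ++ l2) = sum_list l1 + sum_list l2.
Proof. induction l1; simpl; [lra | rewrite IHl1; lra]. Qed.

Lemma sum_map_plus {T : Type} (f g : T -> R) l :
  sum_list (map (fun x => f x + g x) l) = sum_list (map f l) + sum_list (map g l).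
Proof. induction l; simpl; [lra | rewrite IHl; lra]. Qed.

Lemma sum_map_le {T : Type} (f g : T -> R) l :
  (forall x, In x l -> f x <= g x) -> sum_list (map f l) <= sum_list (map g l).
Proof.
  induction l; simpl; intros H; [lra|].
  assert (f a <= g a) by auto. assert (sum_list (map f l) <= sum_list (map g l)) by auto. lra.
Qed.

Lemma sum_map_nonneg {T : Type} (f : T -> R) l :
  (forall x, In x l -> 0 <= f x) -> 0 <= sum_list (map f l).
Proof.
  induction l; simpl; intros H; [lra|].
  assert (0 <= f a) by auto. assert (0 <= sum_list (map f l)) by auto. lra.
Qed.

Lemma sum_map_elem {T : Type} (f : T -> R) l x :
  (forall y, In y l -> 0 <= f y) -> In x l -> f x <= sum_list (map f l).
Proof.
  induction l; simpl; intros H Hx; [contradiction|].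
  destruct Hx as [<-|Hx].
  - assert (0 <= sum_list (map f l)) by (apply sum_map_nonneg; auto). lra.
  - assert (0 <= f a) by auto. assert (f x <= sum_list (map f l)) by auto. lra.
Qed.

Lemma sum_cover {T : Type} (f : T -> R) l l2 :
  NoDup l -> (forall x, 0 <= f x) -> (forall x, In x l -> f x <> 0 -> In x l2) ->
  sum_list (map f l) <= sum_list (map f l2).
Proof.
  revert l2; induction l as [|x l IH]; intros l2 Hnd Hnn Hc; simpl.
  - apply sum_map_nonneg; auto.
  - inversion Hnd as [|x' l' Hnx Hnd']; subst.
    destruct (Req_dec (f x) 0) as [E|E].
    + rewrite E. assert (sum_list (map f l) <= sum_list (map f l2)).
      { apply IH; auto. intros y Hy. apply Hc; right; auto. }
      lra.
    + destruct (in_split x l2 (Hc x (or_introl eq_refl) E)) as [l1 [l3 ->]].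
      rewrite map_app, sum_app; simpl.
      assert (Hle : sum_list (map f l) <= sum_list (map f (l1 ++ l3))).
      { apply IH; auto. intros y Hy Hy0.
        assert (Hin : In y (l1 ++ x :: l3)) by (apply Hc; auto; right; auto).
        apply in_app_or in Hin. destruct Hin as [Hin|[Hin|Hin]]; apply in_or_app; auto.
        subst; contradiction. }
      rewrite map_app, sum_app in Hle. lra.
Qed.

Lemma fsum_le {T : Type} (f : T -> R) r x :
  (forall y, 0 <= f y) -> fsum f r -> f x <= r.
Proof.
  intros Hnn [l [_ [Hc Hs]]]. rewrite <- Hs.
  destruct (Req_dec (f x) 0) as [E|E].
  - rewrite E. apply sum_map_nonneg; auto.
  - apply sum_map_elem; auto.
Qed.

Lemma marg {T P : Type} (u : T -> R) (G : P -> R) (emb : T -> P) r d Phi :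
  (forall f, 0 <= u f) -> (forall p, 0 <= G p) -> Injective emb ->
  fsum u r -> fsum G d -> (forall f, f <> Phi -> G (emb f) = u f) ->
  u Phi <= r <= u Phi + d.
Proof.
  intros Hu HG Hinj Hf1 [l2 [_ [Hc2 Hs2]]] HGu. split.
  { apply fsum_le; auto. }
  destruct Hf1 as [l1 [Hnd1 [Hc1 Hs1]]].
  set (ind := fun f => ifP (f = Phi) (u Phi) 0).
  set (v := fun f => ifP (f = Phi) 0 (u f)).
  assert (Hdec : forall f, u f = ind f + v f).
  { intros f; unfold ind, v, ifP; destruct excluded_middle_informative; subst; lra. }
  rewrite <- Hs1. rewrite (map_ext u (fun f => ind f + v f)) by auto.
  rewrite sum_map_plus.
  assert (H1 : sum_list (map ind l1) <= sum_list (map ind [Phi])).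
  { apply sum_cover; auto.
    - intros f; unfold ind, ifP; destruct excluded_middle_informative; auto; lra.
    - intros f _ Hf; unfold ind, ifP in Hf; destruct excluded_middle_informative; [left; auto|lra]. }
  simpl in H1. unfold ind at 2 in H1. unfold ifP in H1.
  destruct excluded_middle_informative as [_|n]; [|exfalso; auto].
  assert (H2 : sum_list (map v l1) <= sum_list (map (fun f => G (emb f)) l1)).
  { apply sum_map_le. intros f _. unfold v, ifP; destruct excluded_middle_informative; auto.
    rewrite HGu; auto; lra. }
  rewrite <- (map_map emb G) in H2.
  assert (H3 : sum_list (map G (map emb l1)) <= sum_list (map G l2)).
  { apply sum_cover; auto. apply Injective_map_NoDup; auto. }
  lra.
Qed.

Lemma tv (Act : Type) (Psi Psi' : tform Act -> R) d Phi :
  D_is Psi Psi' d -> Rabs (Psi Phi - Psi' Phi) <= d.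
Proof.
  intros [[w [[[Hw0 _] [Hm1 Hm2]] Hcost]] _].
  set (G := fun p : tform Act * tform Act => w p * dtf (fst p) (snd p)).
  assert (HG : forall p, 0 <= G p).
  { intros p; unfold G, dtf, ifP; destruct excluded_middle_informative;
    specialize (Hw0 p); nra. }
  assert (A1 := marg (fun f' => w (Phi, f')) G (fun f' => (Phi, f')) (Psi Phi) d Phi
    (fun f => Hw0 _) HG).
  assert (A2 := marg (fun f => w (f, Phi)) G (fun f => (f, Phi)) (Psi' Phi) d Phi
    (fun f => Hw0 _) HG).
  destruct A1 as [A1 A1'].
  - intros x y H; injection H; auto.
  - apply Hm1.
  - exact Hcost.
  - intros f Hf; unfold G, dtf, ifP; simpl; destruct excluded_middle_informative as [e|];
      [exfalso; auto | lra].
  - destruct A2 as [A2 A2'].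
    + intros x y H; injection H; auto.
    + apply Hm2.
    + exact Hcost.
    + intros f Hf; unfold G, dtf, ifP; simpl; destruct excluded_middle_informative as [e|];
        [exfalso; auto | lra].
    + unfold Rabs; destruct Rcase_abs; lra.
Qed.

Definition ctrace {Z Act : Type} (c : list (Act * (Z -> R) * Z)) : list Act :=
  map (fun p => fst (fst p)) c.

Fixpoint ftr {Act : Type} (f : tform Act) : list Act :=
  match f with TTop => [] | TDia a f' => a :: ftr f' end.

Lemma sat_tr {Z Act : Type} (Phi : tform Act) : forall (c : list (Act * (Z -> R) * Z)),
  comp_sat c Phi -> length c = depth Phi -> ctrace c = ftr Phi.
Proof.
  induction Phi as [|a Phi IH]; intros [|[[b pi] z] c]; simpl; intros H1 H2; try easy.
  destruct H1 as [-> H1]. unfold ctrace in *; simpl. f_equal. apply IH; auto.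
Qed.

Lemma comp_prob_pos {Z Act : Type} (transZ : Z -> Act -> (Z -> R) -> Prop) :
  forall c z, is_comp transZ z c -> 0 < comp_prob c.
Proof.
  induction c as [|[[a pi] z'] c IH]; simpl; intros z H; [lra|].
  destruct H as [_ [H1 H2]]. apply Rmult_lt_0_compat; eauto.
Qed.

Definition suppl {T : Type} (pi : T -> R) : list T :=
  match excluded_middle_informative (exists l : list T, forall x, pi x <> 0 -> In x l) with
  | left H => proj1_sig (constructive_indefinite_description _ H)
  | right _ => []
  end.

Lemma suppl_spec {T : Type} (pi : T -> R) x : is_fdist pi -> pi x <> 0 -> In x (suppl pi).
Proof.
  intros Hf Hx. unfold suppl. destruct excluded_middle_informative as [H|H].
  - destruct (constructive_indefinite_description _ H) as [l Hl]; simpl; auto.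
  - exfalso; apply H. destruct Hf as [_ [l [_ [Hc _]]]]; eauto.
Qed.

Lemma collect {A : Type} (P : A -> list R -> Prop) l :
  (forall x V V', P x V -> incl V V' -> P x V') ->
  (forall x, In x l -> exists V, P x V) -> exists V, forall x, In x l -> P x V.
Proof.
  intros Hmono; induction l as [|a l IH]; intros H.
  - exists []; intros _ [].
  - destruct (H a (or_introl eq_refl)) as [Va HVa].
    destruct IH as [Vl HVl]. { intros x Hx; apply H; right; auto. }
    exists (Va ++ Vl). intros x [<-|Hx]; eapply Hmono; eauto.
    + apply incl_appl, incl_refl.
    + apply incl_appr, incl_refl.
Qed.

Definition Matched {S Act Z : Type} (trans : S -> Act -> (S -> R) -> Prop)
  (transZ : Z -> Act -> (Z -> R) -> Prop) (corr : Z -> S) : Prop :=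
  forall z a pi, transZ z a pi -> exists pi', trans (corr z) a pi' /\
     forall z', 0 < pi z' -> pi z' = pi' (corr z').

Lemma good (S Act : Type) (trans : S -> Act -> (S -> R) -> Prop)
  (Hwf : pts_wf trans) (Himg : image_finite trans) :
  forall tr t, exists V : list R, forall (Z : Type) (transZ : Z -> Act -> (Z -> R) -> Prop)
    (corr : Z -> S) z c, Matched trans transZ corr -> corr z = t -> is_comp transZ z c ->
    ctrace c = tr -> In (comp_prob c) V.
Proof.
  induction tr as [|a tr IH]; intros t.
  - exists [1]. intros Z transZ corr z c _ _ _ Htr. destruct c; [simpl; auto | discriminate].
  - destruct (Himg t a) as [L HL].
    destruct (collect (fun t' V => forall (Z : Type) (transZ : Z -> Act -> (Z -> R) -> Prop)
      (corr : Z -> S) z c, Matched trans transZ corr -> corr z = t' -> is_comp transZ z c ->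
      ctrace c = tr -> In (comp_prob c) V) (flat_map suppl L)) as [Vt HVt].
    + intros x V V' H Hi; intros; apply Hi; eapply H; eauto.
    + intros x _; apply IH.
    + exists (flat_map (fun pi => flat_map (fun t' => map (Rmult (pi t')) Vt) (suppl pi)) L).
      intros Z transZ corr z c HM Hz Hc Htr.
      destruct c as [|[[b piZ] z'] c]; [discriminate|].
      simpl in Hc. destruct Hc as [Htz [Hpos Hc]].
      unfold ctrace in Htr; simpl in Htr. injection Htr as -> Htr.
      destruct (HM _ _ _ Htz) as [pi' [Htr' Heq]]. rewrite Hz in Htr'.
      assert (Hin : In pi' L) by (apply HL; auto).
      assert (Hfd := Hwf _ _ _ Htr').
      assert (Hs : In (corr z') (suppl pi')).
      { apply suppl_spec; auto. rewrite <- (Heq z' Hpos); lra. }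
      simpl. rewrite (Heq z' Hpos).
      apply in_flat_map; exists pi'; split; auto.
      apply in_flat_map; exists (corr z'); split; auto.
      apply in_map. eapply (HVt (corr z')); eauto.
      apply in_flat_map; eauto.
Qed.

Lemma sums_fin (V : list R) (n : nat) : exists W, forall ys,
  (forall y, In y ys -> In y V) -> (length ys <= n)%nat -> In (sum_list ys) W.
Proof.
  induction n as [|n [W HW]].
  - exists [0]. intros [|y ys] _ Hl; simpl in *; [left; auto | lia].
  - exists (W ++ flat_map (fun v => map (Rplus v) W) V).
    intros [|y ys] Hin Hlen.
    + apply in_or_app; left; apply HW; simpl; auto; lia.
    + simpl. apply in_or_app; right; apply in_flat_map; exists y; split.
      * apply Hin; left; auto.
      * apply in_map; apply HW; [intros; apply Hin; right; auto | simpl in Hlen; lia].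
Qed.

Lemma minpos (V : list R) : exists m, 0 < m /\ forall v, In v V -> 0 < v -> m <= v.
Proof.
  induction V as [|a V [m [Hm H]]].
  - exists 1; split; [lra | intros _ []].
  - destruct (Rlt_dec 0 a).
    + exists (Rmin m a); split; [apply Rmin_glb_lt; auto|].
      intros v [<-|Hv] Hp; [apply Rmin_r | eapply Rle_trans; [apply Rmin_l | auto]].
    + exists m; split; auto. intros v [<-|Hv] Hp; [lra | auto].
Qed.

Lemma sum_ge_len (ys : list R) m : (forall y, In y ys -> m <= y) ->
  INR (length ys) * m <= sum_list ys.
Proof.
  induction ys as [|a ys IH]; cbn [length sum_list]; intros H; [simpl; lra|].
  rewrite S_INR. assert (m <= a) by (apply H; left; auto).
  assert (INR (length ys) * m <= sum_list ys) by (apply IH; intros; apply H; right; auto).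
  replace ((INR (length ys) + 1) * m) with (INR (length ys) * m + m) by ring. lra.
Qed.

Lemma sum_filter {T : Type} (X : T -> Prop) (g : T -> R) l :
  sum_list (map (fun c => ifP (X c) (g c) 0) l) =
  sum_list (map g (filter (fun c => if excluded_middle_informative (X c) then true else false) l)).
Proof.
  induction l; simpl; [auto|]. unfold ifP at 1.
  destruct excluded_middle_informative; simpl; rewrite IHl; lra.
Qed.

Lemma valfin (S Act : Type) (trans : S -> Act -> (S -> R) -> Prop)
  (Hwf : pts_wf trans) (Himg : image_finite trans) (s : S) (Phi : tform Act) :
  exists W : list R, forall Psi', Lset trans s Psi' -> Psi' Phi = 0 \/ In (Psi' Phi) W.
Proof.
  destruct (good S Act trans Hwf Himg (ftr Phi) s) as [V HV].
  destruct (minpos V) as [m [Hm HmV]].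
  destruct (archimed_cor1 m Hm) as [N [HN HN0]].
  destruct (sums_fin V N) as [W HW]. exists W.
  intros Psi' [[Hnn Hs1] Hsat].
  destruct (Req_dec (Psi' Phi) 0) as [E|E]; [left; auto | right].
  destruct Hsat as [Z [transZ [corr [zs [Hres Hprob]]]]].
  destruct Hres as [_ [Hcs [_ [_ [HM _]]]]].
  assert (Hp : 0 < Psi' Phi) by (specialize (Hnn Phi); lra).
  destruct (Hprob Phi Hp) as [l [_ [_ Hsum]]].
  rewrite sum_filter in Hsum.
  set (ys := map (@comp_prob Z Act) (filter _ l)) in Hsum.
  assert (Hys : forall y, In y ys -> In y V /\ 0 < y).
  { intros y Hy. apply in_map_iff in Hy as [c [<- Hc]].
    apply filter_In in Hc as [_ Hb].
    destruct excluded_middle_informative as [[[Hcomp _] [Hst Hlen]]|]; [|discriminate].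
    split.
    - eapply HV; eauto. apply sat_tr; auto.
    - eapply comp_prob_pos; eauto. }
  rewrite <- Hsum. apply HW.
  - intros y Hy; apply Hys; auto.
  - apply Nat.nle_gt in HN0. apply Nat.le_ngt. intro Hlt.
    assert (Hge : INR (length ys) * m <= sum_list ys).
    { apply sum_ge_len. intros y Hy. destruct (Hys y Hy). apply HmV; auto. }
    assert (H1 : Psi' Phi <= 1) by (apply fsum_le; auto).
    assert (HNl : INR N <= INR (length ys)) by (apply le_INR; lia).
    assert (HNpos : 0 < INR N) by (apply lt_0_INR; lia).
    assert (Hk : 1 < INR N * m).
    { apply (Rmult_lt_compat_l (INR N)) in HN; auto.
      rewrite Rinv_r in HN by lra. lra. }
    assert (INR N * m <= INR (length ys) * m) by (apply Rmult_le_compat_r; lra).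
    lra.
Qed.

Lemma gap1 (x : R) (W : list R) : exists e, 0 < e /\ forall y, In y W -> Rabs (x - y) < e -> x = y.
Proof.
  induction W as [|y W [e [He H]]].
  - exists 1; split; [lra | intros _ []].
  - destruct (Req_dec x y) as [E|E].
    + exists e; split; auto. intros y' [<-|Hy] Ha; auto.
    + assert (Hp : 0 < Rabs (x - y)) by (apply Rabs_pos_lt; lra).
      exists (Rmin e (Rabs (x - y))); split; [apply Rmin_glb_lt; auto|].
      intros y' [<-|Hy] Ha.
      * assert (Rmin e (Rabs (x - y)) <= Rabs (x - y)) by apply Rmin_r. lra.
      * apply H; auto. eapply Rlt_le_trans; [eauto | apply Rmin_l].
Qed.

Lemma gap (xs W : list R) : exists e, 0 < e /\
  forall x y, In x xs -> In y W -> Rabs (x - y) < e -> x = y.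
Proof.
  induction xs as [|x xs [e [He H]]].
  - exists 1; split; [lra | intros _ _ []].
  - destruct (gap1 x W) as [e1 [He1 H1]].
    exists (Rmin e e1); split; [apply Rmin_glb_lt; auto|].
    intros x' y [<-|Hx] Hy Ha.
    + apply H1; auto. eapply Rlt_le_trans; [eauto | apply Rmin_r].
    + apply H; auto. eapply Rlt_le_trans; [eauto | apply Rmin_l].
Qed.

Theorem proposition15 (S Act : Type) (trans : S -> Act -> (S -> R) -> Prop)
  (Hwf : pts_wf trans)
  (Himg : image_finite trans)
  (Hfin : forall t : S, finite_process trans t)
  (s : S) :
  D_closed (Lset trans s).
Proof.
  intros Psi HPsi Hnot.
  destruct HPsi as [Hnn [lF [HndF [HcF HsF]]]].
  destruct (collect (fun Phi W => forall Psi', Lset trans s Psi' -> Psi' Phi = 0 \/ In (Psi' Phi) W) lF)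
    as [W HW].
  { intros x V V' H Hi Psi' HL. destruct (H Psi' HL); [left | right; apply Hi]; auto. }
  { intros x _; apply (valfin S Act trans Hwf Himg s). }
  destruct (gap (map Psi lF) (0 :: W)) as [e [He Hg]].
  exists e; split; auto.
  intros Psi' d Htdf HD Hd HL. apply Hnot.
  assert (Heq : forall Phi, In Phi lF -> Psi Phi = Psi' Phi).
  { intros Phi Hin. apply Hg.
    - apply in_map; auto.
    - destruct (HW Phi Hin Psi' HL) as [E|E]; [left; auto | right; auto].
    - eapply Rle_lt_trans; [apply tv; eauto | auto]. }
  assert (Hfun : Psi' = Psi).
  { apply functional_extensionality. intros Phi.
    destruct (classic (In Phi lF)) as [Hin|Hin].
    - symmetry; auto.
    - assert (E0 : Psi Phi = 0).
      { destruct (Req_dec (Psi Phi) 0); auto. exfalso; apply Hin; apply HcF; auto. }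
      rewrite E0. destruct (Req_dec (Psi' Phi) 0) as [E|E]; auto. exfalso.
      destruct Htdf as [Hnn' [l' [_ [Hc' Hs']]]].
      assert (Hle : sum_list (map Psi' (Phi :: lF)) <= sum_list (map Psi' l')).
      { apply sum_cover; auto. constructor; auto. }
      simpl in Hle. rewrite Hs' in Hle.
      rewrite (map_ext_in Psi' Psi lF) in Hle by (intros; symmetry; auto).
      rewrite HsF in Hle. specialize (Hnn' Phi). lra. }
  rewrite <- Hfun; exact HL.
Qed.
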